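(* The irreducible $\lambda$-quiddities over $(\mathbb{Z}/2\mathbb{Z})\times(\mathbb{Z}/3\mathbb{Z})$ are exactly, up to cyclic permutation, the following (entries are pairs (residue mod 2, residue mod 3)): - $((1,1),(1,1),(1,1))$, $((1,-1),(1,-1),(1,-1))$; - $((0,0),(0,0),(0,0),(0,0))$, $((0,0),(0,1),(0,0),(0,-1))$, $((0,0),(1,0),(0,0),(1,0))$, $((0,1),(0,-1),(0,1),(0,-1))$, $((1,0),(0,-1),(1,0),(0,1))$; - $((1,0),(1,0),(1,0),(1,0),(1,0),(1,0))$, $((0,1),(0,1),(0,1),(0,1),(0,1),(0,1))$, $((0,-1),(0,-1),(0,-1),(0,-1),(0,-1),(0,-1))$.
   Context: For $a_1,\ldots,a_n$ in a commutative unital ring $A$, $M_n(a_1,\ldots,a_n)=\begin{pmatrix}a_n&-1\\1&0\end{pmatrix}\cdots\begin{pmatrix}a_1&-1\\1&0\end{pmatrix}$. An $n$-tuple $(a_1,\ldots,a_n)\in A^n$ is a $\lambda$-quiddity over $A$ if $M_n(a_1,\ldots,a_n)=\pm\mathrm{Id}$. For $(a_1,\ldots,a_n)\in A^n$, $(b_1,\ldots,b_m)\in A^m$, define $(a_1,\ldots,a_n)\oplus(b_1,\ldots,b_m)=(a_1+b_m,a_2,\ldots,a_{n-1},a_n+b_1,b_2,\ldots,b_{m-1})$. Write $(a_1,\ldots,a_n)\sim(b_1,\ldots,b_n)$ if $(b_1,\ldots,b_n)$ is obtained from $(a_1,\ldots,a_n)$ or from $(a_n,\ldots,a_1)$ by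 a cyclic permutation. A $\lambda$-quiddity $(c_1,\ldots,c_n)$ with $n\ge3$ is reducible if there exist a $\lambda$-quiddity $(b_1,\ldots,b_l)$ and a tuple $(a_1,\ldots,a_m)$ with $l,m\ge3$ and $(c_1,\ldots,c_n)\sim(a_1,\ldots,a_m)\oplus(b_1,\ldots,b_l)$; it is irreducible otherwise (by convention $(0,0)$ is reducible). *)

(* Defs.v *)
From HB Require Import structures.
From mathcomp Require Import all_boot all_order all_algebra.
Set Implicit Arguments. Unset Strict Implicit. Unset Printing Implicit Defensive.
Import Order.TTheory GRing.Theory.
Local Open Scope ring_scope.

Definition A : comNzRingType := ('Z_2 * 'Z_3)%type.

Definition pr (x : 'Z_2) (y : 'Z_3) : A := (x, y).

Definition elem (R : comNzRingType) (a : R) : 'M[R]_2 :=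
  \matrix_(i < 2, j < 2)
    (if (i == 0) && (j == 0) then a
     else if (i == 0) && (j == 1) then -1
     else if (i == 1) && (j == 0) then 1 else 0).

Definition Mq (R : comNzRingType) (s : seq R) : 'M[R]_2 :=
  foldl (fun M a => elem a *m M) 1%:M s.

Definition lambda_quiddity (R : comNzRingType) (s : seq R) : Prop :=
  Mq s = 1%:M \/ Mq s = - 1%:M.

(* (a_1..a_m) (+) (b_1..b_l) = (a_1+b_l, a_2..a_{m-1}, a_m+b_1, b_2..b_{l-1}) *)
Definition oplus (R : comNzRingType) (a b : seq R) : seq R :=
  (a`_0 + b`_(size b).-1)
    :: take (size a - 2) (drop 1 a)
    ++ (a`_(size a).-1 + b`_0) :: take (size b - 2) (drop 1 b).

Definition qsim (R : comNzRingType) (c d : seq R) : Prop :=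
  exists k, d = rot k c \/ d = rot k (rev c).

Definition reducible (R : comNzRingType) (c : seq R) : Prop :=
  exists (a b : seq R),
    (3 <= size a)%N /\ (3 <= size b)%N /\ lambda_quiddity b /\ qsim c (oplus a b).

(* irreducible lambda-quiddity: n >= 3 (so the conventional (0,0) is excluded) *)
Definition irreducible_quiddity (R : comNzRingType) (c : seq R) : Prop :=
  (3 <= size c)%N /\ lambda_quiddity c /\ ~ reducible c.

Definition irr_list : seq (seq A) :=
  [:: [:: pr 1 1; pr 1 1; pr 1 1];
      [:: pr 1 (-1); pr 1 (-1); pr 1 (-1)];
      [:: pr 0 0; pr 0 0; pr 0 0; pr 0 0];
      [:: pr 0 0; pr 0 1; pr 0 0; pr 0 (-1)];
      [:: pr 0 0; pr 1 0; pr 0 0; pr 1 0];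
      [:: pr 0 1; pr 0 (-1); pr 0 1; pr 0 (-1)];
      [:: pr 1 0; pr 0 (-1); pr 1 0; pr 0 1];
      [:: pr 1 0; pr 1 0; pr 1 0; pr 1 0; pr 1 0; pr 1 0];
      [:: pr 0 1; pr 0 1; pr 0 1; pr 0 1; pr 0 1; pr 0 1];
      [:: pr 0 (-1); pr 0 (-1); pr 0 (-1); pr 0 (-1); pr 0 (-1); pr 0 (-1)]].

(* Main.v *)
Require Import Defs.
From mathcomp Require Import all_boot all_order all_algebra.
From mathcomp Require Import ring zify.
From Stdlib Require Import Lia.
Set Implicit Arguments. Unset Strict Implicit. Unset Printing Implicit Defensive.
Import GRing.Theory.
Local Open Scope ring_scope.

Definition M4 := (A * A * A * A)%type.
Definition emul (a : A) (m : M4) : M4 :=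
  let: (p, q, r, s) := m in (a * p - r, a * q - s, p, q).
Definition mqf (m : M4) (s : seq A) : M4 := foldl (fun m a => emul a m) m s.
Definition I4 : M4 := (1, 0, 0, 1).
Definition mq (s : seq A) : M4 := mqf I4 s.
Definition tomx (m : M4) : 'M[A]_2 :=
  let: (p, q, r, s) := m in
  \matrix_(i < 2, j < 2) (if i == 0 then (if j == 0 then p else q) else (if j == 0 then r else s)).

Lemma elem_tomx a m : elem a *m tomx m = tomx (emul a m).
Proof.
case: m => [[[p q] r] s] /=; apply/matrixP => i j.
rewrite !mxE big_ord_recl big_ord1 !mxE.
case: i => [[|[|i]] Hi] //; case: j => [[|[|j]] Hj] //=; rewrite ?mxE /=; ring.
Qed.

Lemma Mq_mq s : Mq s = tomx (mq s).
Proof.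
have E : (1%:M : 'M[A]_2) = tomx I4.
  apply/matrixP => i j; rewrite !mxE.
  by case: i => [[|[|i]] Hi] //; case: j => [[|[|j]] Hj].
rewrite /Mq /mq /mqf E; elim: s I4 => [|a s IH] m //=.
by rewrite elem_tomx IH.
Qed.

Lemma tomx_inj m1 m2 : tomx m1 = tomx m2 -> m1 = m2.
Proof.
case: m1 => [[[p q] r] s]; case: m2 => [[[p' q'] r'] s'] /= E.
have E' := congr1 (fun M : 'M[A]_2 => (M 0 0, M 0 1, M 1 0, M 1 1)) E.
by move: E'; rewrite !mxE /= => [[-> -> -> ->]].
Qed.

Definition isq (c : seq A) : bool := (mq c == I4) || (mq c == (-1, 0, 0, -1)).

Lemma lqP c : lambda_quiddity c <-> isq c.
Proof.
rewrite /lambda_quiddity /isq Mq_mq.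
have -> : (- 1%:M : 'M[A]_2) = tomx (-1, 0, 0, -1).
  apply/matrixP => i j; rewrite !mxE.
  by case: i => [[|[|i]] Hi] //; case: j => [[|[|j]] Hj] //=; rewrite ?oppr0.
have -> : (1%:M : 'M[A]_2) = tomx I4.
  apply/matrixP => i j; rewrite !mxE.
  by case: i => [[|[|i]] Hi] //; case: j => [[|[|j]] Hj].
split.
  by case=> /tomx_inj ->; rewrite eqxx ?orbT.
by case/orP=> /eqP ->; [left|right].
Qed.
Lemma eq4 (a b c d a' b' c' d' : A) :
  a = a' -> b = b' -> c = c' -> d = d' -> (a, b, c, d) = (a', b', c', d').
Proof. by move=> -> -> -> ->. Qed.

Definition mul4 (m1 m2 : M4) : M4 :=
  let: (p, q, r, s) := m1 in let: (p', q', r', s') := m2 in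
  (p * p' + q * r', p * q' + q * s', r * p' + s * r', r * q' + s * s').

Lemma mqf_mul w m : mqf m w = mul4 (mq w) m.
Proof.
rewrite /mq; elim: w m => [|a w IH] m /=.
  by case: m => [[[p q] r] s]; rewrite /mqf /mul4 /I4 /=; apply: eq4; ring.
change (mqf (emul a m) w = mul4 (mqf (emul a I4) w) m); rewrite (IH (emul a m)) (IH (emul a I4)).
case: (mqf I4 w) => [[[p q] r] s]; case: m => [[[p' q'] r'] s']; rewrite /mul4 /emul /I4 /=.
apply: eq4; ring.
Qed.

Definition det4 (m : M4) : A := let: (p, q, r, s) := m in p * s - q * r.

Lemma det_mq w : det4 (mq w) = 1.
Proof.
elim/last_ind: w => [|w a IH]; first by rewrite /= mulr1 mulr0 subr0.
rewrite /mq /mqf foldl_rcons -/(mqf I4 w) -/(mq w).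
move: IH; case: (mq w) => [[[p q] r] s] /= <-; ring.
Qed.

Definition pm1 (x : A) : bool := (x == 1) || (x == -1).
Definition isbad (w : seq A) : bool := pm1 (mq w).1.1.1.

Lemma mq_cons_rcons x w y :
  mq (x :: rcons w y) = emul y (mul4 (mq w) (emul x I4)).
Proof. by rewrite /mq /= /mqf foldl_rcons -/(mqf _ w) mqf_mul. Qed.

Lemma isbad_of_isq x w y : isq (x :: rcons w y) -> isbad w.
Proof.
rewrite /isq /isbad mq_cons_rcons.
case: (mq w) => [[[p q] r] s] /=.
have hp : p = - (p * (x * 0 - 1) + q * 0) by ring.
case/orP => /eqP E; have /= E4 := congr1 (fun m : M4 => m.2) E;
  by rewrite /pm1 hp E4 ?opprK eqxx ?orbT.
Qed.

Lemma isq_of_isbad w : isbad w ->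
  exists x y, isq (x :: rcons w y).
Proof.
rewrite /isbad; have := det_mq w.
case E: (mq w) => [[[p q] r] s] /= D Hp.
have h1 : p * p - 1 = 0.
  by apply/eqP; rewrite subr_eq0; case/orP: Hp => /eqP ->; rewrite ?mulrNN mulr1.
have h2 : p * s - q * r - 1 = 0 by rewrite D subrr.
exists (- (p * q)), (p * r); rewrite /isq mq_cons_rcons E /=.
set c1 := (X in (X, _, _, _)).
set c2 := (X in (_, X, _, _)).
set c3 := (X in (_, _, X, _)).
set c4 := (X in (_, _, _, X)).
have e1 : c1 = - p.
  apply/eqP; rewrite -subr_eq0 opprK; apply/eqP.
  have -> : c1 + p = (s - p * q * r) * (p * p - 1) - p * (p * s - q * r - 1) by rewrite /c1; ring.
  by rewrite h1 h2 !mulr0 subr0.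
have e2 : c2 = 0.
  have -> : c2 = - r * (p * p - 1) by rewrite /c2; ring.
  by rewrite h1 mulr0.
have e3 : c3 = 0.
  have -> : c3 = - q * (p * p - 1) by rewrite /c3; ring.
  by rewrite h1 mulr0.
have e4 : c4 = - p by rewrite /c4; ring.
rewrite e1 e2 e3 e4.
by case/orP: Hp => /eqP ->; rewrite ?opprK eqxx ?orbT.
Qed.

Definition badc (c : seq A) : bool :=
  has (fun k => has (fun j => isbad (take j (rot k c))) (iota 1 (size c - 3)))
      (iota 0 (size c)).

Lemma badc_intro c k j : (k < size c)%N -> (0 < j)%N -> (j + 3 <= size c)%N ->
  isbad (take j (rot k c)) -> badc c.
Proof.
move=> Hk Hj Hjn Hb; apply/hasP; exists k; first by rewrite mem_iota.
apply/hasP; exists j => //; rewrite mem_iota; apply/andP; split => //.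
lia.
Qed.

Lemma rot_norm (s : seq A) k : (0 < size s)%N -> exists2 k', (k' < size s)%N & rot k s = rot k' s.
Proof.
move=> H; case: (ltnP k (size s)) => Hk; first by exists k.
by exists 0%N => //; rewrite rot0 rot_oversize.
Qed.

Lemma rot_rot_norm (s : seq A) m k : (0 < size s)%N ->
  exists2 k', (k' < size s)%N & rot m (rot k s) = rot k' s.
Proof. by move=> H; rewrite rot_rot_add; apply: rot_norm. Qed.

Lemma oplus_eq2 (a0 al x y : A) (am w : seq A) :
  oplus (a0 :: rcons am al) (x :: rcons w y) = ((a0 + y) :: rcons am (al + x)) ++ w.
Proof.
rewrite /oplus /= !size_rcons /= !subn2 /= !drop0 !nth_rcons !ltnn !eqxx.
rewrite -!cats1 !take_size_cat //.
by rewrite -catA.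
Qed.

Lemma bad_red c : badc c -> reducible c.
Proof.
case/hasP => k; rewrite mem_iota add0n => /andP [_ Hk].
case/hasP => j; rewrite mem_iota => /andP [Hj1 Hj2] Hb.
have [x [y Hq]] := isq_of_isbad Hb.
have Hn : (0 < size c)%N by lia.
set r := rot k c in Hb.
have Hr : size r = size c by rewrite size_rot.
have Hv : (3 <= size (drop j r))%N by rewrite size_drop Hr; lia.
have [k' _ Ek'] := rot_rot_norm j k Hn.
have Ej : rot j r = drop j r ++ take j r.
  by rewrite /rot.
move: Hv Ej; case: (drop j r) => [|v0 v'] //=.
case/lastP: v' => [|vm vl] //= Hv Ej.
exists ((v0 - y) :: rcons vm (vl - x)), (x :: rcons (take j r) y).
split; first by rewrite /= size_rcons; move: Hv; rewrite size_rcons.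
split; first by rewrite /= size_rcons; rewrite size_take; move: Hj1 Hj2; rewrite Hr; case: ifP; lia.
split; first by apply/lqP.
exists k'; left; rewrite oplus_eq2 subrK subrK.
by rewrite -Ek' Ej.
Qed.

Lemma red_bad c : reducible c -> badc c || badc (rev c).
Proof.
case=> a [b [Ha [Hb [Hq [k Hk]]]]].
move: Ha Hq Hk; case: a => [|a0 a'] //; case/lastP: a' => [|am al] //.
move: Hb; case: b => [|x b'] //; case/lastP: b' => [|w y] //.
rewrite /= !size_rcons => Hb Ha /lqP Hq.
have Hw := isbad_of_isq Hq.
rewrite oplus_eq2.
set V := (a0 + y :: rcons am (al + x)).
have HV : size V = (size am).+2 by rewrite /= size_rcons.
have key : forall c', V ++ w = rot k c' -> badc c'.
  move=> c' E.
  have Hs : size c' = (size V + size w)%N by rewrite -(size_rot k) -E size_cat.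
  have Hn : (0 < size c')%N by lia.
  have [k' Hk' Ek'] := rot_rot_norm (size V) k Hn.
  apply: (badc_intro (k := k') (j := size w)) => //; first by rewrite Hs HV addnC leq_add2r.
  by rewrite -Ek' -E rot_size_cat take_size_cat.
by case=> E; [rewrite (key c) | rewrite (key (rev c)) ?orbT].
Qed.

Definition listA : seq A := [:: pr 0 0; pr 0 1; pr 0 (-1); pr 1 0; pr 1 1; pr 1 (-1)].
Definition listA4 : seq A := [:: pr 0 0; pr 0 1; pr 0 (-1); pr 1 0].

Lemma memA (x : A) : x \in listA.
Proof.
by case: x => [[[|[|i]] Hi] [[|[|[|j]]] Hj]] //; vm_compute.
Qed.

Fixpoint words (L : seq A) (n : nat) : seq (seq A) :=
  if n is n'.+1 then [seq a :: w | a <- L, w <- words L n'] else [:: [::]].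

Lemma words_mem L c : all (mem L) c -> c \in words L (size c).
Proof.
elim: c => [|a c IH] //= /andP [Ha Hc].
by apply: (allpairs_f (fun a w => a :: w)) => //; apply: IH.
Qed.

Definition inlistrot (c : seq A) : bool :=
  has (fun q => has (fun k => c == rot k q) (iota 0 (size q))) irr_list.

Definition chk L n := all (fun c => isq c ==> ~~ badc c ==> inlistrot c) (words L n).

Lemma chk3 : chk listA 3. Proof. by vm_compute. Qed.
Lemma chk4 : chk listA4 4. Proof. by vm_compute. Qed.
Lemma chk5 : chk listA4 5. Proof. by vm_compute. Qed.
Lemma chk6 : chk listA4 6. Proof. by vm_compute. Qed.

Lemma chkw4 : all (fun w => has (fun i => has (fun j => isbad (take j (drop i w)))
   (iota 1 (4 - i))) (iota 0 4)) (words listA 4).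
Proof. by vm_compute. Qed.

Lemma chkA : all (fun x => isbad [:: x] || (x \in listA4)) listA.
Proof. by vm_compute. Qed.

Lemma chklist : all (fun q => (3 <= size q)%N && all (fun k => isq (rot k q) && ~~ badc (rot k q)
   && ~~ badc (rev (rot k q))) (iota 0 (size q))) irr_list.
Proof. by vm_compute. Qed.

Lemma big_bad c : (7 <= size c)%N -> badc c.
Proof.
move=> Hn.
have Hw : take 4 c \in words listA 4.
  have Hs : size (take 4 c) = 4%N by rewrite size_take; case: ifP => //; lia.
  rewrite -[X in words _ X]Hs.
  by apply: words_mem; apply/allP => x _; apply: memA.
have := allP chkw4 _ Hw.
case/hasP => i; rewrite mem_iota add0n => /andP [_ Hi].
case/hasP => j; rewrite mem_iota => /andP [Hj1 Hj2] Hb.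
apply: (badc_intro (k := i) (j := j)) => //; try lia.
have E : take j (drop i (take 4 c)) = take j (rot i c).
  rewrite /rot -{1}(subnK (ltnW Hi)) -take_drop take_takel; last by lia.
  by rewrite take_cat size_drop ifT //; lia.
by rewrite -E.
Qed.

Lemma letters c : (4 <= size c)%N -> ~~ badc c -> all (mem listA4) c.
Proof.
move=> Hn Hb; apply/allP => x xc.
have Hi : (index x c < size c)%N by rewrite index_mem.
have E : take 1 (rot (index x c) c) = [:: x].
  by rewrite /rot (drop_nth x Hi) /= take0 nth_index.
have := allP chkA x (memA x); case/orP => // Hx.
case/negP: Hb; apply: (badc_intro (k := index x c) (j := 1)) => //.
by rewrite E.
Qed.

Theorem proposition4p2 (c : seq A) :
  irreducible_quiddity c <->
  exists2 q, q \in irr_list & exists k : nat, c = rot k q.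
Proof.
split.
  case=> H3 [/lqP Hq Hr].
  have Hb : ~~ badc c by apply/negP => /bad_red.
  suff : inlistrot c.
    by case/hasP => q qin /hasP [k _ /eqP ->]; exists q => //; exists k.
  case: (leqP 7 (size c)) => H7; first by rewrite big_bad in Hb.
  have HL : forall L n, size c = n -> all (mem L) c -> chk L n -> inlistrot c.
    move=> L n <- HL /allP /(_ c (words_mem HL)).
    by rewrite Hq Hb.
  have Hl4 : (4 <= size c)%N -> all (mem listA4) c by move=> H; apply: letters.
  move: H3 H7 Hl4 HL; case: (size c) => [|[|[|[|[|[|[|n]]]]]]] //= _ _ Hl4 HL.
  - by apply: (HL listA 3%N (erefl _) _ chk3); apply/allP => x _; apply: memA.
  - by apply: (HL listA4 4%N (erefl _) (Hl4 isT) chk4).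
  - by apply: (HL listA4 5%N (erefl _) (Hl4 isT) chk5).
  - by apply: (HL listA4 6%N (erefl _) (Hl4 isT) chk6).
case=> q qin [k ->].
have /andP [H3 Hall] := allP chklist q qin.
have [k' Hk' ->] := rot_norm k (leq_trans (isT : (0 < 3)%N) H3).
have /andP [/andP [Hq Hb1] Hb2] : isq (rot k' q) && ~~ badc (rot k' q) && ~~ badc (rev (rot k' q)) by apply: (allP Hall); rewrite mem_iota.
split; first by rewrite size_rot.
split; first by apply/lqP.
by move/red_bad; rewrite (negbTE Hb1) (negbTE Hb2).
Qed.
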